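(* Let $(\mathbb{Z},H^+)$ be a simple component with $N_H$ the unique element of $H^+$ such that $N_H-1\notin H^+$ and $N_H+k\in H^+$ for all $k\in\mathbb{Z}^+$. Let $a\in\mathbb{N}$ and $p,c,d\in\mathbb{N}$ with $\gcd(a,p)=\gcd(a,c)=\gcd(c,d)=1$, $pc\equiv pd\equiv1\pmod a$, $p\in H^+$, $pc>aN_H$, $d>\max\{(a-1)pc+a(N_H-1),ac\}$, and let $G^+=aH^++p\langle c,d\rangle$, so that $(\mathbb{Z},G^+)$ is a simple component. Let $N_G$ be the unique element of $G^+$ with $N_G-1\notin G^+$ and $N_G+k\in G^+$ for all $k\in\mathbb{Z}^+$. Then $N_G=(a-1)pc+a(N_H-1)+1$.
   Context: A simple component is a simple partially ordered abelian group $(\mathbb{Z},P)$ (every nonzero element of $P$ is an order-unit). $\langle c,d\rangle$ is the submonoid of $\mathbb{Z}^+$ generated by $c,d$, and $aH^++p\langle c,d\rangle=\{ah+pz: h\in H^+, z\in\langle c,d\rangle\}$. *)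

(* Defs.v *)
From mathcomp Require Import all_boot all_order all_algebra.
Set Implicit Arguments. Unset Strict Implicit. Unset Printing Implicit Defensive.
Import Order.TTheory GRing.Theory Num.Theory.
Local Open Scope ring_scope.

(* A partially ordered abelian group structure on Z is given by its positive
   cone P : int -> Prop (a submonoid with P /\ -P = {0}). *)
Definition positive_cone (P : int -> Prop) : Prop :=
  [/\ P 0,
      (forall x y, P x -> P y -> P (x + y)) &
      (forall x, P x -> P (- x) -> x = 0)].

Definition order_unit (P : int -> Prop) (u : int) : Prop :=
  P u /\ forall z : int, exists n : nat, P (u *+ n - z).

Definition simple_component (P : int -> Prop) : Prop :=
  positive_cone P /\ forall u, P u -> u != 0 -> order_unit P u.

Definition is_conductor (P : int -> Prop) (N : int) : Prop :=
  [/\ P N, ~ P (N - 1) & forall k : nat, P (N + k%:Z)].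

Definition gen2 (c d : nat) (z : int) : Prop :=
  exists m n : nat, z = (m * c + n * d)%N%:Z.

Definition Gcone (H : int -> Prop) (a p c d : nat) (z : int) : Prop :=
  exists h w : int, [/\ H h, gen2 c d w & z = a%:Z * h + p%:Z * w].

(* Main.v *)
Require Import Defs.
From mathcomp Require Import all_boot all_order all_algebra.
From mathcomp Require Import zify ring lra.
Import Order.TTheory GRing.Theory Num.Theory.
Local Open Scope ring_scope.

Lemma cone_muln (H : int -> Prop) x n : positive_cone H -> H x -> H (x * n%:Z).
Proof.
case=> H0 HD _ Hx; elim: n => [|n IH]; first by rewrite mulr0.
by rewrite intS mulrDr mulr1; apply: HD.
Qed.

Lemma H_nonneg (H : int -> Prop) NH : positive_cone H -> is_conductor H NH ->
  forall x, H x -> 0 <= x.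
Proof.
move=> Hc [HN _ Hk] x Hx; rewrite leNgt; apply/negP => xlt.
set K := (`|NH|%N).+1.
have H1 := @cone_muln H x K Hc Hx.
have H2 := Hk (absz ((- x) * K%:Z - NH)%R).
have e : NH + ((absz ((- x) * K%:Z - NH)%R))%:Z = - (x * K%:Z).
  have : 1 * K%:Z <= (-x) * K%:Z by apply: ler_wpM2r; lia.
  lia.
rewrite e in H2.
case: Hc => _ _ /(_ _ H1) /(_ H2) /eqP.
rewrite mulf_eq0; lia.
Qed.

Lemma G_nonneg (H : int -> Prop) NH a p c d : positive_cone H -> is_conductor H NH ->
  forall z, Gcone H a p c d z -> 0 <= z.
Proof.
move=> Hc HN z [h [w [Hh [m [n ->]] ->]]].
have h0 := H_nonneg _ _ Hc HN _ Hh.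
apply: addr_ge0; apply: mulr_ge0 => //.
Qed.

Lemma G_all (H : int -> Prop) NH (a p c d : nat) :
  positive_cone H -> is_conductor H NH -> (0 < a)%N ->
  (p * c = 1 %[mod a])%N -> (0 < p * c)%N ->
  forall x, (a%:Z - 1) * (p * c)%N%:Z + a%:Z * (NH - 1) + 1 <= x ->
  Gcone H a p c d x.
Proof.
move=> Hc HN a0 pcm pc0 x Mx.
have NH0 : 0 <= NH by by case: (HN) => HN1 _ _; exact: (H_nonneg _ _ Hc HN _ HN1).
have x0 : 0 <= x.
  have : 0 <= (a%:Z - 1) * ((p * c)%N%:Z - 1) by apply: mulr_ge0; lia.
  have : 0 <= a%:Z * NH by apply: mulr_ge0; lia.
  nia.
set N := absz x.
have xN : x = N%:Z by rewrite /N; lia.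
set j := (N %% a)%N; set q := (N %/ a)%N; set s := ((p * c) %/ a)%N.
have e1 : N = (q * a + j)%N by rewrite /q /j -divn_eq.
have jlt : (j < a)%N by rewrite /j ltn_pmod.
have e2 : (p * c = s * a + 1 %% a)%N by rewrite /s {1}(divn_eq (p * c) a) pcm.
have e3 : (j * (1 %% a) = j)%N.
  case: (ltngtP a 1) => [|ha|ha]; first lia.
    by rewrite modn_small // muln1.
  by move: jlt; rewrite ha; case: (j).
have e4 : (j * (p * c) = j * s * a + j)%N by rewrite e2 mulnDr e3 mulnA.
have ex : x = a%:Z * (q%:Z - (j * s)%N%:Z) + p%:Z * (j * c)%N%:Z.
  rewrite xN e1.
  move/(congr1 (fun n : nat => n%:Z)): e4; rewrite !PoszD !PoszM.
  lia.
exists (q%:Z - (j * s)%N%:Z), (j * c)%N%:Z; split => //.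
- set h := q%:Z - _.
  have hN : NH <= h.
    have : 0 <= (a%:Z - 1 - j%:Z) * (p * c)%N%:Z by apply: mulr_ge0; lia.
    have : (h - NH + 1 <= 0) -> a%:Z * (h - NH + 1) <= 0.
      by move=> hle; apply: mulr_ge0_le0; lia.
    move: ex; rewrite PoszM. nia.
  case: HN => _ _ /(_ (absz (h - NH)%R)).
  by have -> : NH + (absz (h - NH)%R)%:Z = h by lia.
- by exists j, 0%N; rewrite mul0n addn0.
Qed.

Lemma notG (H : int -> Prop) NH (a p c d : nat) :
  positive_cone H -> is_conductor H NH -> (0 < a)%N ->
  (p * c = 1 %[mod a])%N -> (p * d = 1 %[mod a])%N -> H p%:Z ->
  a%:Z * NH < (p * c)%N%:Z ->
  (a%:Z - 1) * (p * c)%N%:Z + a%:Z * (NH - 1) < d%:Z ->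
  ~ Gcone H a p c d ((a%:Z - 1) * (p * c)%N%:Z + a%:Z * (NH - 1) + 1 - 1).
Proof.
move=> Hc HN a0 pcm pdm Hp aNH Md [h [w [Hh [m [n ew]] E]]].
have h0 := H_nonneg _ _ Hc HN _ Hh.
have NH0 : 0 <= NH by case: (HN) => HN1 _ _; exact: (H_nonneg _ _ Hc HN _ HN1).
case: HN => _ HN1 _.
case: (ltngtP a 1) => [|ha|ha]; first lia.
2:{ subst a; apply: HN1.
    have Hpw := cone_muln _ _ (m * c + n * d)%N Hc Hp.

    case: Hc => _ HD _; have := HD _ _ Hh Hpw.
    by rewrite ew in E; have -> : NH - 1 = h + p%:Z * (m * c + n * d)%N%:Z by lia. }
have e1a : (1 %% a = 1)%N by rewrite modn_small.
set s := ((p * c) %/ a)%N; set t := ((p * d) %/ a)%N.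
have e2 : (p * c = s * a + 1)%N by rewrite /s {1}(divn_eq (p * c) a) pcm e1a.
have e3 : (p * d = t * a + 1)%N by rewrite /t {1}(divn_eq (p * d) a) pdm e1a.
have f1 : (m * (p * c) = m * s * a + m)%N by rewrite e2 mulnDr muln1 mulnA.
have f2 : (n * (p * d) = n * t * a + n)%N by rewrite e3 mulnDr muln1 mulnA.
move/(congr1 (fun n : nat => n%:Z)): f1; rewrite !PoszD !PoszM => f1.
move/(congr1 (fun n : nat => n%:Z)): f2; rewrite !PoszD !PoszM => f2.
move/(congr1 (fun n : nat => n%:Z)): e2; rewrite !PoszD !PoszM => e2'.
rewrite ew !PoszD !PoszM in E.
set K := (a%:Z - 1) * s%:Z + NH - h - m%:Z * s%:Z - n%:Z * t%:Z.
have f0 : (a%:Z - 1) * (p%:Z * c%:Z) = (a%:Z - 1) * s%:Z * a%:Z + (a%:Z - 1).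
  by rewrite e2'; ring.
have eK : m%:Z + n%:Z + 1 = a%:Z * K.
  have -> : a%:Z * K = (a%:Z - 1) * s%:Z * a%:Z + a%:Z * NH - a%:Z * h
     - m%:Z * s%:Z * a%:Z - n%:Z * t%:Z * a%:Z by rewrite /K; ring.
  have E2 : p%:Z * (m%:Z * c%:Z + n%:Z * d%:Z) = m%:Z * (p%:Z * c%:Z) + n%:Z * (p%:Z * d%:Z) by ring.
  rewrite E2 f1 f2 f0 in E.
  lia.
have K1 : 1 <= K.
  have : (K <= 0) -> a%:Z * K <= 0 by move=> hle; apply: mulr_ge0_le0; lia.
  lia.
have ah : 0 <= a%:Z * h by apply: mulr_ge0; lia.
clearbody K.
case: n ew eK f2 E => [|n] ew eK f2 E.
- case: (ltrP K 2) => K2.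
  + have eK1 : K = 1 by lia.
    rewrite eK1 mulr1 in eK.
    apply: HN1.
    have : a%:Z * (NH - 1) = a%:Z * h.
      have em : m%:Z = a%:Z - 1 by lia.
      move: E; rewrite em; lia.
    move/mulfI => -> //; lia.
  + have : 0 <= (m%:Z - (2 * a%:Z - 1)) * (p%:Z * c%:Z).
      apply: mulr_ge0; last lia.
      have : a%:Z * 2 <= a%:Z * K by apply: ler_wpM2l; lia.
      lia.
    have : 0 <= (a%:Z - 1) * (p%:Z * c%:Z) by apply: mulr_ge0; lia.
    rewrite PoszM in aNH Md.
    lia.
- have : 0 <= p%:Z * m%:Z * c%:Z by apply: mulr_ge0 => //; apply: mulr_ge0.
  have : 0 <= (p%:Z * n.+1%:Z - 1) * d%:Z.
    apply: mulr_ge0; last lia.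
    have p1 : 1 <= p%:Z by move: aNH; rewrite PoszM; case: (p) => //; rewrite mul0r; lia.
    have : 1 * 1 <= p%:Z * n.+1%:Z by apply: ler_pM => //; lia.
    lia.
  rewrite PoszM in aNH Md.
  lia.
Qed.

Theorem corollary4p4 (H : int -> Prop) (NH : int) (a p c d : nat) :
  simple_component H ->
  is_conductor H NH ->
  gcdn a p = 1%N -> gcdn a c = 1%N -> gcdn c d = 1%N ->
  (p * c = 1 %[mod a])%N -> (p * d = 1 %[mod a])%N ->
  H p%:Z ->
  a%:Z * NH < (p * c)%N%:Z ->
  (a%:Z - 1) * (p * c)%N%:Z + a%:Z * (NH - 1) < d%:Z ->
  (a * c < d)%N ->
  simple_component (Gcone H a p c d) /\
  is_conductor (Gcone H a p c d)
    ((a%:Z - 1) * (p * c)%N%:Z + a%:Z * (NH - 1) + 1).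
Proof.
move=> [Hc _] HN gap gac gcd pcm pdm Hp aNH Md acd.
set M := (a%:Z - 1) * _ + _ + 1.
have NH0 : 0 <= NH by case: (HN) => HN1 _ _; exact: (H_nonneg _ _ Hc HN _ HN1).
have Gnn := G_nonneg H NH a p c d Hc HN.
have Gall : forall x, M <= x -> Gcone H a p c d x.
  case: (posnP a) => [a0|apos] x Mx.
    move: gap gac; rewrite a0 !gcd0n => p1 c1.
    move: Mx; rewrite /M a0 p1 c1 => Mx.
    case: (HN) => HN1 _ _.
    exists NH, x; split => //; last by lia.
    by exists (absz x), 0%N; lia.
  apply: (G_all H NH) => //.
  have : 0 <= a%:Z * NH by apply: mulr_ge0; lia.
  lia.
have notG' : ~ Gcone H a p c d (M - 1).
  case: (posnP a) => [a0|apos].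
    have p1 : p = 1%N by rewrite -gap a0 gcd0n.
    have c1 : c = 1%N by rewrite -gac a0 gcd0n.
    move=> G1; have := Gnn _ G1; rewrite /M a0 p1 c1; lia.
  exact: notG.
split; last first.
  split; [exact: Gall | exact: notG' | move=> k; apply: Gall; lia].
split.
  split.
  - exists 0, 0; split.
    + by case: Hc.
    + by exists 0%N, 0%N.
    + by rewrite !mulr0 addr0.
  - move=> x y [h1 [w1 [H1 [m1 [n1 e1]] ->]]] [h2 [w2 [H2 [m2 [n2 e2]] ->]]].
    exists (h1 + h2), (w1 + w2); split.
    + by case: Hc => _ HD _; apply: HD.
    + by exists (m1 + m2)%N, (n1 + n2)%N; rewrite e1 e2; lia.
    + ring.
  - by move=> x G1 G2; have := Gnn _ G1; have := Gnn _ G2; lia.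
move=> u Gu u0; split => // z.
have u1 := Gnn _ Gu.
exists (absz (z + M)%R); apply: Gall.
rewrite -mulr_natr.
have : 1 * (absz (z + M)%R)%:R <= u * (absz (z + M)%R)%:R.
  apply: ler_wpM2r => //; lia.
lia.
Qed.
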